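(* Let $R$ be a commutative noetherian ring, $\mathfrak{a}$ an ideal contained in the Jacobson radical of $R$, and $M$ a finitely generated $R$-module. The maps $f\colon C_{\mathfrak{a}}(M)\to\operatorname{Hom}_R(\widehat{R}^{\mathfrak{a}},M)$, $f(m)(r)=rm$, and $e\colon\operatorname{Hom}_R(\widehat{R}^{\mathfrak{a}},M)\to C_{\mathfrak{a}}(M)$, $e(\varphi)=\varphi(1)$, are well defined and are mutually inverse isomorphisms. In particular, $\operatorname{Hom}_R(\widehat{R}^{\mathfrak{a}},M)$ is a finitely generated $R$-module.
   Context: $\widehat{R}^{\mathfrak{a}}$ is the $\mathfrak{a}$-adic completion of $R$. A module $N$ is $\mathfrak{a}$-adically complete if $N\to\varprojlim_n N/\mathfrak{a}^nN$ is an isomorphism. $C_{\mathfrak{a}}(M)$ denotes the unique maximal $\mathfrak{a}$-adically complete $R$-submodule of $M$ (it exists and is naturally an $\widehat{R}^{\mathfrak{a}}$-module, so $f$ makes sense). *)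

(* Defs.v *)
From HB Require Import structures.
From mathcomp Require Import all_boot all_algebra.
Set Implicit Arguments. Unset Strict Implicit. Unset Printing Implicit Defensive.
Import GRing.Theory.
Local Open Scope ring_scope.

Section CommAlg.
Variable R : comNzRingType.

Definition is_ideal (I : R -> Prop) : Prop :=
  [/\ I 0, (forall x y, I x -> I y -> I (x + y)) & (forall r x, I x -> I (r * x))].

Definition ideal_span (s : seq R) (x : R) : Prop :=
  exists c : nat -> R, x = \sum_(i < size s) c i * s`_i.

Definition noetherian : Prop :=
  forall I, is_ideal I ->
    exists s : seq R, forall x, I x <-> ideal_span s x.

Definition maximal_ideal (I : R -> Prop) : Prop :=
  [/\ is_ideal I, ~ I 1 &
      forall J, is_ideal J -> (forall x, I x -> J x) -> ~ J 1 -> forall x, J x -> I x].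

Definition jacobson (x : R) : Prop := forall I, maximal_ideal I -> I x.

Fixpoint idealpow (a : R -> Prop) (n : nat) : R -> Prop :=
  match n with
  | 0 => fun _ => True
  | n'.+1 => fun x => exists s : seq (R * R),
      (forall p, p \in s -> a p.1 /\ idealpow a n' p.2) /\
      x = \sum_(p <- s) p.1 * p.2
  end.

Variable M : lmodType R.

Definition submodule (N : M -> Prop) : Prop :=
  [/\ N 0, (forall x y, N x -> N y -> N (x + y)) & (forall r x, N x -> N (r *: x))].

Definition mod_span (s : seq M) (m : M) : Prop :=
  exists c : nat -> R, m = \sum_(i < size s) c i *: s`_i.

Definition fin_gen_module : Prop := exists s : seq M, forall m, mod_span s m.

Definition powmod (a : R -> Prop) (n : nat) (N : M -> Prop) (m : M) : Prop :=
  exists s : seq (R * M),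
    (forall p, p \in s -> idealpow a n p.1 /\ N p.2) /\
    m = \sum_(p <- s) p.1 *: p.2.

(* N is a-adically complete: the canonical map N -> lim_n N/a^nN is bijective.
   Injectivity: kernel \bigcap_n a^nN is 0.  Surjectivity: every compatible
   system (x_n) (x_(n+1) = x_n mod a^nN) has a limit m (m = x_n mod a^nN). *)
Definition adic_complete (a : R -> Prop) (N : M -> Prop) : Prop :=
  (forall m, N m -> (forall n, powmod a n N m) -> m = 0) /\
  (forall x : nat -> M, (forall n, N (x n)) ->
     (forall n, powmod a n N (x n.+1 - x n)) ->
     exists m, N m /\ forall n, powmod a n N (m - x n)).

(* C_a(M): the maximal a-adically complete submodule, i.e. the union of all
   a-adically complete submodules (by the context this is itself one). *)
Definition Ca (a : R -> Prop) (m : M) : Prop :=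
  exists N, [/\ submodule N, adic_complete a N & N m].

(* Elements of the completion R^a = lim_n R/a^n, represented by compatible
   sequences of representatives; two represent the same element iff ceq. *)
Definition csq (a : R -> Prop) (s : nat -> R) : Prop :=
  forall n, idealpow a n (s n.+1 - s n).

Definition ceq (a : R -> Prop) (s t : nat -> R) : Prop :=
  forall n, idealpow a n (s n - t n).

(* Hom_R(R^a, M): maps on representatives that respect ceq, are additive
   and R-linear (R acting on R^a through R -> R^a). *)
Definition is_hom (a : R -> Prop) (phi : (nat -> R) -> M) : Prop :=
  [/\ (forall s t, csq a s -> csq a t -> ceq a s t -> phi s = phi t),
      (forall s t, csq a s -> csq a t ->
          phi (fun n => s n + t n) = phi s + phi t) &
      (forall r s, csq a s -> phi (fun n => r * s n) = r *: phi s)].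

(* The R^a-module structure on C_a(M): for r in R^a (represented by s) and
   m in C_a(M), x = r m is the a-adic limit in C_a(M) of the s n *: m. *)
Definition cact (a : R -> Prop) (s : nat -> R) (m x : M) : Prop :=
  Ca a x /\ forall n, powmod a n (Ca a) (x - s n *: m).

Definition is_f_of (a : R -> Prop) (m : M) (phi : (nat -> R) -> M) : Prop :=
  forall s, csq a s -> cact a s m (phi s).

Definition one_seq : nat -> R := fun _ => 1.

End CommAlg.

(* Main.v *)
Require Import Defs.
From HB Require Import structures.
From mathcomp Require Import all_boot all_algebra.
From mathcomp Require Import ring.
From Stdlib Require Import Classical IndefiniteDescription FunctionalExtensionality.
Import GRing.Theory.
Local Open Scope ring_scope.

Module Aux.
Set Implicit Arguments. Unset Strict Implicit. Unset Printing Implicit Defensive.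

Section Spans.
Variable R : comNzRingType.
Variable V : lmodType R.

Fixpoint spanM (s : seq V) (x : V) : Prop :=
  match s with
  | [::] => x = 0
  | g :: s' => exists r y, spanM s' y /\ x = r *: g + y
  end.

Lemma mod_spanE s x : mod_span s x <-> spanM s x.
Proof.
elim: s x => [|g s IH] x /=.
  split; first by case=> c ->; rewrite big_ord0.
  by move=> ->; exists (fun _ => 0); rewrite big_ord0.
split.
  case=> c ->; rewrite big_ord_recl /=.
  exists (c 0%N), (\sum_(i < size s) c (bump 0 i) *: s`_i); split => //.
  by apply/IH; exists (fun i => c i.+1).
case=> r [y [/IH [c ->] ->]].
exists (fun i => if i is i'.+1 then c i' else r).
by rewrite big_ord_recl /=.
Qed.

Lemma spanM_sub s : submodule (spanM s).
Proof.
elim: s => [|g s [H0 HD HZ]] /=.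
  split => //; first by move=> x y -> ->; rewrite addr0.
  by move=> r x ->; rewrite scaler0.
split; first by exists 0, 0; rewrite scale0r addr0.
  move=> x y [r1 [y1 [h1 ->]]] [r2 [y2 [h2 ->]]].
  exists (r1 + r2), (y1 + y2); split; first exact: HD.
  by rewrite scalerDl addrACA.
move=> r x [r1 [y1 [h1 ->]]]; exists (r * r1), (r *: y1); split; first exact: HZ.
by rewrite scalerDr scalerA.
Qed.

Lemma spanM_mem s x : x \in s -> spanM s x.
Proof.
elim: s => [|g s IH] //=; rewrite inE => /orP [/eqP ->|/IH h].
  by exists 1, 0; split; [case: (spanM_sub s)|rewrite scale1r addr0].
by exists 0, x; rewrite scale0r add0r.
Qed.

Lemma spanM_min s (E : V -> Prop) : submodule E -> (forall x, x \in s -> E x) ->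
  forall x, spanM s x -> E x.
Proof.
move=> [E0 ED EZ]; elim: s => [|g s IH] hs x /=; first by move->.
case=> r [y [hy ->]]; apply: ED; first by apply: EZ; apply: hs; rewrite inE eqxx.
by apply: IH => // z hz; apply: hs; rewrite inE hz orbT.
Qed.

Lemma spanM_cat s t x : spanM (s ++ t) x <-> exists y z, spanM s y /\ spanM t z /\ x = y + z.
Proof.
elim: s x => [|g s IH] x /=.
  by split; [move=> h; exists 0, x; rewrite add0r|case=> y [z [-> [h ->]]]; rewrite add0r].
split.
  case=> r [y [/IH [y1 [z1 [h1 [h2 ->]]]] ->]].
  by exists (r *: g + y1), z1; split; [exists r, y1|split => //; rewrite addrA].
case=> y [z [[r [y1 [h1 ->]]] [h2 ->]]].
exists r, (y1 + z); split; last by rewrite addrA.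
by apply/IH; exists y1, z.
Qed.

End Spans.


Section Ideals.
Variable R : comNzRingType.

Definition spanI (s : seq R) : R -> Prop := @spanM R R^o s.

Lemma spanI_cons g s x : spanI (g :: s) x <-> exists r y, spanI s y /\ x = r * g + y.
Proof. by []. Qed.

Lemma ideal_spanE s x : ideal_span s x <-> spanI s x.
Proof. exact: (@mod_spanE R R^o s x). Qed.

Lemma spanI_ideal s : is_ideal (spanI s).
Proof. exact: (@spanM_sub R R^o s). Qed.

Lemma submodule_ideal (I : R -> Prop) : is_ideal I <-> submodule (I : R^o -> Prop).
Proof. by []. Qed.
End Ideals.


Section Pow.
Variable R : comNzRingType.
Implicit Types (a I : R -> Prop).

Lemma idealN I x : is_ideal I -> I x -> I (- x).
Proof. by case=> _ _ HM h; rewrite -mulN1r; apply: HM. Qed.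
Lemma idealB I x y : is_ideal I -> I x -> I y -> I (x - y).
Proof. by move=> hI hx hy; case: (hI) => _ HD _; apply: HD => //; apply: idealN. Qed.
Lemma idealMr I x r : is_ideal I -> I x -> I (x * r).
Proof. by case=> _ _ HM h; rewrite mulrC; apply: HM. Qed.
Lemma ideal_sum I (T : Type) (s : seq T) (P : pred T) (F : T -> R) :
  is_ideal I -> (forall i, P i -> I (F i)) -> I (\sum_(i <- s | P i) F i).
Proof. by case=> H0 HD _ h; apply: big_ind. Qed.

Lemma idealpow_ideal a n : is_ideal a -> is_ideal (idealpow a n).
Proof.
move=> [a0 aD aM]; case: n => [|n] //=.
split.
- by exists [::]; rewrite big_nil.
- move=> x y [s1 [h1 ->]] [s2 [h2 ->]]; exists (s1 ++ s2); rewrite big_cat; split => //.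
  by move=> p; rewrite mem_cat => /orP [/h1|/h2].
- move=> r x [s [h ->]]; exists (map (fun p => (r * p.1, p.2)) s); split.
    by move=> p /mapP [q /h [h1 h2] ->]; split => //; apply: aM.
  by rewrite big_map mulr_sumr; apply: eq_bigr => p _; rewrite mulrA.
Qed.

Lemma idealpowS a n x y : a x -> idealpow a n y -> idealpow a n.+1 (x * y).
Proof.
move=> hx hy; exists [:: (x, y)]; rewrite big_seq1; split => // p.
by rewrite inE => /eqP ->.
Qed.

Lemma idealpow_decS a n x : is_ideal a -> idealpow a n.+1 x -> idealpow a n x.
Proof.
move=> ha [s [h ->]]; rewrite big_seq; apply: ideal_sum; first exact: idealpow_ideal.
move=> p hp; case: (idealpow_ideal n ha) => _ _ HM.
by case: (h p hp) => _ h2; apply: HM.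
Qed.

Lemma idealpow_dec a n m x : is_ideal a -> (n <= m)%N -> idealpow a m x -> idealpow a n x.
Proof.
move=> ha /subnK <-; elim: (m - n)%N x => [|k IH] x; first by rewrite add0n.
by rewrite addSn => /(idealpow_decS ha); apply: IH.
Qed.

Lemma idealpow_mono a b n x : (forall y, a y -> b y) -> idealpow a n x -> idealpow b n x.
Proof.
move=> hab; elim: n x => [|n IH] x //= [s [h ->]]; exists s; split => // p /h [h1 h2].
by split; [apply: hab|apply: IH].
Qed.

Lemma idealpow1 a x : is_ideal a -> idealpow a 1 x -> a x.
Proof.
move=> ha [s [h ->]]; rewrite big_seq; apply: ideal_sum => // p /h [h1 _].
by apply: idealMr.
Qed.

End Pow.


Section PowMod.
Variable R : comNzRingType.
Variable M : lmodType R.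
Implicit Types (a : R -> Prop) (N : M -> Prop).

Lemma subN N x : submodule N -> N x -> N (- x).
Proof. by case=> _ _ HZ h; rewrite -scaleN1r; apply: HZ. Qed.
Lemma subB N x y : submodule N -> N x -> N y -> N (x - y).
Proof. by move=> hN hx hy; case: (hN) => _ HD _; apply: HD => //; apply: subN. Qed.
Lemma sub_sum N (T : Type) (s : seq T) (P : pred T) (F : T -> M) :
  submodule N -> (forall i, P i -> N (F i)) -> N (\sum_(i <- s | P i) F i).
Proof. by case=> H0 HD _ h; apply: big_ind. Qed.
Lemma subD N x y : submodule N -> N x -> N y -> N (x + y).
Proof. by case=> _ HD _; apply: HD. Qed.
Lemma subZ N r x : submodule N -> N x -> N (r *: x).
Proof. by case=> _ _ HZ; apply: HZ. Qed.
Lemma sub0 N : submodule N -> N 0.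
Proof. by case. Qed.

Lemma powmod_sub a n N : is_ideal a -> submodule (powmod a n N).
Proof.
move=> ha; split.
- by exists [::]; rewrite big_nil.
- move=> x y [s1 [h1 ->]] [s2 [h2 ->]]; exists (s1 ++ s2); rewrite big_cat; split => //.
  by move=> p; rewrite mem_cat => /orP [/h1|/h2].
- move=> r x [s [h ->]]; exists (map (fun p => (r * p.1, p.2)) s); split.
    move=> p /mapP [q /h [h1 h2] ->]; split => //.
    by case: (idealpow_ideal n ha) => _ _ HM; apply: HM.
  by rewrite big_map scaler_sumr; apply: eq_bigr => p _; rewrite scalerA.
Qed.

Lemma powmod_single a n N r x : idealpow a n r -> N x -> powmod a n N (r *: x).
Proof.
move=> hr hx; exists [:: (r, x)]; rewrite big_seq1; split => // p.
by rewrite inE => /eqP ->.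
Qed.

Lemma powmod_le a n N x : is_ideal a -> submodule N -> powmod a n N x -> N x.
Proof.
move=> ha hN [s [h ->]]; rewrite big_seq; apply: sub_sum => // p /h [_ h2].
exact: subZ.
Qed.

Lemma powmod_monoN a n N N' x : (forall y, N y -> N' y) -> powmod a n N x -> powmod a n N' x.
Proof. by move=> hN [s [h ->]]; exists s; split => // p /h [h1 /hN]. Qed.

Lemma powmod_dec a n m N x : is_ideal a -> (n <= m)%N -> powmod a m N x -> powmod a n N x.
Proof.
move=> ha hnm [s [h ->]]; exists s; split => // p /h [h1 h2]; split => //.
exact: idealpow_dec hnm h1.
Qed.

Lemma powmod_T a n N x : powmod a n N x -> powmod a n (fun _ => True) x.
Proof. exact: powmod_monoN. Qed.

End PowMod.


Lemma exists_maximal (X : Type) (S : (X -> Prop) -> Prop) :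
  (forall C : nat -> X -> Prop, (forall n, S (C n)) -> (forall n x, C n x -> C n.+1 x) ->
     exists n, forall x, C n.+1 x -> C n x) ->
  forall A0, S A0 -> exists K, S K /\ forall K', S K' -> (forall x, K x -> K' x) ->
     forall x, K' x -> K x.
Proof.
move=> acc A0 SA0; apply: NNPP => H.
have step : forall K : {K | S K}, exists K' : {K | S K},
    (forall x, proj1_sig K x -> proj1_sig K' x) /\ exists x, proj1_sig K' x /\ ~ proj1_sig K x.
  move=> K; apply: NNPP => H1; apply: H; exists (proj1_sig K); split; first exact: proj2_sig.
  move=> K' SK' sub x Kx; apply: NNPP => nK; apply: H1.
  by exists (exist _ K' SK'); split => //; exists x.
pose f K := proj1_sig (constructive_indefinite_description _ (step K)).
have fP K := proj2_sig (constructive_indefinite_description _ (step K)).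
pose C n := proj1_sig (iter n f (exist _ A0 SA0)).
have [n hn] := acc C (fun n => proj2_sig _) (fun n x h => (fP _).1 x h).
by have [x [h1 h2]] := (fP (iter n f (exist _ A0 SA0))).2; apply: h2; apply: hn.
Qed.

Section Noeth.
Variable R : comNzRingType.
Variable M : lmodType R.
Hypothesis noeth : noetherian R.

Lemma noeth_mod (l : seq M) (E : M -> Prop) : submodule E -> (forall e, E e -> spanM l e) ->
  exists t, forall e, E e <-> spanM t e.
Proof.
elim: l E => [|g l IH] E hE hEl.
  exists [::] => e; split; first exact: hEl.
  by move=> /= ->; exact: sub0.
pose E' e := E e /\ spanM l e.
have hE' : submodule E'.
  have [a0 aD aZ] := spanM_sub l.
  split; first by split => //; exact: sub0.
    by move=> x y [h1 h2] [h3 h4]; split; [apply: subD|apply: aD].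
  by move=> r x [h1 h2]; split; [apply: subZ|apply: aZ].
have [t' ht'] := IH E' hE' (fun e h => h.2).
pose I r := exists e y, E e /\ spanM l y /\ e = r *: g + y.
have hI : is_ideal I.
  have [a0 aD aZ] := spanM_sub l.
  split.
  - by exists 0, 0; rewrite scale0r addr0; split => //; exact: sub0.
  - move=> x y [e1 [y1 [h1 [h2 he1]]]] [e2 [y2 [h3 [h4 he2]]]].
    exists (e1 + e2), (y1 + y2); split; first exact: subD.
    by split; [apply: aD|rewrite he1 he2 scalerDl addrACA].
  - move=> r x [e1 [y1 [h1 [h2 he1]]]]; exists (r *: e1), (r *: y1).
    by split; [apply: subZ|split; [apply: aZ|rewrite he1 scalerDr scalerA]].
have [rs hrs] := noeth hI.
have W : forall rs', (forall r, spanI rs' r -> I r) -> exists w : seq M,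
    (forall x, spanM w x -> E x) /\
    forall r, spanI rs' r -> exists e y, spanM w e /\ spanM l y /\ e = r *: g + y.
  elim=> [|r1 rs' IHr] hr.
    exists [::]; split; first by move=> x /= ->; exact: sub0.
    move=> r /= ->; exists 0, 0; rewrite scale0r addr0; split => //.
    by case: (spanM_sub l).
  have hsub : forall r, spanI rs' r -> spanI (r1 :: rs') r.
    by move=> r h; exists 0, r; split => //; rewrite scale0r add0r.
  have [w' [hw'1 hw'2]] := IHr (fun r h => hr r (hsub r h)).
  have [e1 [y1 [h1 [h2 h3]]]] : I r1.
    apply: hr; exists 1, 0; split; last by rewrite scale1r addr0.
    by case: (@spanM_sub R R^o rs').
  exists (e1 :: w'); split.
    by move=> x /= [c [x' [hx' ->]]]; apply: (subD hE); [apply: (subZ _ hE)|apply: hw'1].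
  move=> r [d [r' [hr' ->]]]; have [e' [y' [he' [hy' he'e]]]] := hw'2 r' hr'.
  exists (d *: e1 + e'), (d *: y1 + y'); split; first by exists d, e'.
  split; first by case: (spanM_sub l) => _ aD aZ; apply: aD => //; apply: aZ.
  by rewrite h3 he'e scalerDr scalerA addrACA -scalerDl.
have [w [hw1 hw2]] := W rs (fun r h => (hrs r).2 (proj2 (ideal_spanE rs r) h)).
exists (w ++ t') => e; split.
  move=> he; have [r [y [hy he']]] := hEl e he.
  have Ir : I r by exists e, y.
  have [e2 [y2 [he2 [hy2 he2']]]] := hw2 r (proj1 (ideal_spanE rs r) ((hrs r).1 Ir)).
  apply/spanM_cat; exists e2, (e - e2); split => //; split; last by rewrite addrC subrK.
  apply/ht'; split; first by apply: subB => //; apply: hw1.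
  have -> : e - e2 = y - y2 by rewrite he' he2' opprD addrACA subrr add0r.
  by apply: subB => //; exact: spanM_sub.
case/spanM_cat => y [z [hy [hz ->]]]; apply: subD => //; first exact: hw1.
by have [] := (ht' z).2 hz.
Qed.

Lemma acc_mod : fin_gen_module M -> forall C : nat -> M -> Prop,
  (forall n, submodule (C n)) -> (forall n x, C n x -> C n.+1 x) ->
  exists n, forall x, C n.+1 x -> C n x.
Proof.
move=> [l hl] C hC hinc.
have mono : forall i j x, (i <= j)%N -> C i x -> C j x.
  move=> i j x /subnK <-; elim: (j - i)%N => [|k IHk] h; first by rewrite add0n.
  by rewrite addSn; apply: hinc; apply: IHk.
pose U x := exists n, C n x.
have hU : submodule U.
  split; first by exists 0%N; exact: sub0.
    move=> x y [i hi] [j hj]; exists (maxn i j).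
    by apply: subD => //; [apply: mono hi; apply: leq_maxl|apply: mono hj; apply: leq_maxr].
  by move=> r x [i hi]; exists i; apply: subZ.
have [t ht] := noeth_mod hU (fun e _ => proj1 (mod_spanE l e) (hl e)).
have : forall t' : seq M, (forall x, x \in t' -> U x) -> exists n, forall x, spanM t' x -> C n x.
  elim=> [|g t' IHt] h.
    by exists 0%N => x /= ->; exact: sub0.
  have [n1 hn1] : U g by apply: h; rewrite inE eqxx.
  have h' : forall x, x \in t' -> U x by move=> x hx; apply: h; rewrite inE hx orbT.
  have [n2 hn2] := IHt h'.
  exists (maxn n1 n2) => x /= [r [y [hy ->]]]; apply: subD => //.
    by apply: subZ => //; apply: mono hn1; apply: leq_maxl.
  by apply: mono (hn2 _ hy); apply: leq_maxr.
case/(_ t (fun x hx => (ht x).2 (spanM_mem hx))) => n hn.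
by exists n => x hx; apply: hn; apply/ht; exists n.+1.
Qed.

End Noeth.


Section Nak.
Variable R : comNzRingType.
Hypothesis noeth : noetherian R.

Lemma fg_regular : @fin_gen_module R R^o.
Proof.
exists [:: 1] => m; apply/mod_spanE; exists m, 0; split => //.
by rewrite addr0 /GRing.scale /= mulr1.
Qed.

Lemma jac_unit (x : R) : jacobson x -> exists u, u * (1 - x) = 1.
Proof.
move=> hx; pose I r := exists u, r = u * (1 - x).
have hI : is_ideal I.
  split; first by exists 0; rewrite mul0r.
    by move=> y z [u ->] [v ->]; exists (u + v); rewrite mulrDl.
  by move=> r y [u ->]; exists (r * u); rewrite mulrA.
case: (classic (I 1)) => [[u hu]|nI1]; first by exists u.
pose S J := is_ideal J /\ (forall y, I y -> J y) /\ ~ J 1.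
have acc : forall C : nat -> R -> Prop, (forall n, S (C n)) -> (forall n x, C n x -> C n.+1 x) ->
     exists n, forall x, C n.+1 x -> C n x.
  move=> C hC hinc.
  have hC' : forall n, @submodule R R^o (C n) by move=> n; case: (hC n).
  exact: (@acc_mod R R^o noeth fg_regular C hC' hinc).
have [K [[hK [hIK nK1]] hmax]] := exists_maximal acc (conj hI (conj (fun y h => h) nI1)).
have mK : maximal_ideal K.
  split => // J hJ hKJ nJ1; apply: hmax => //.
  by split => //; split => // y /hIK /hKJ.
exfalso; apply: nK1.
have -> : (1 : R) = x + (1 - x) by rewrite addrC subrK.
case: hK => _ HD _; apply: HD; first exact: hx.
by apply: hIK; exists 1; rewrite mul1r.
Qed.

Variable M : lmodType R.
Variable a : R -> Prop.
Hypothesis ha : is_ideal a.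
Hypothesis hjac : forall x, a x -> jacobson x.

Lemma nakayama (t : seq M) (N : M -> Prop) : submodule N -> (forall e, N e <-> spanM t e) ->
  (forall e, N e -> powmod a 1 N e) -> forall e, N e -> e = 0.
Proof.
elim: t N => [|g t IH] N hN hNt hpow e; first by move/hNt.
have hg : N g by apply/hNt; apply: spanM_mem; rewrite inE eqxx.
have [s [hs gs]] := hpow g hg.
have key : forall s : seq (R * M), (forall p, p \in s -> idealpow a 1 p.1 /\ N p.2) ->
    exists c y, a c /\ spanM t y /\ \sum_(p <- s) p.1 *: p.2 = c *: g + y.
  elim=> [|p s' IHs] h.
    exists 0, 0; rewrite big_nil scale0r addr0; split; first by case: ha.
    by split => //; case: (spanM_sub t).
  rewrite big_cons.
  have h' : forall q, q \in s' -> idealpow a 1 q.1 /\ N q.2.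
    by move=> q hq; apply: h; rewrite inE hq orbT.
  have [c [y [hc [hy ->]]]] := IHs h'.
  have [hp1 /hNt [q [z [hz hp2]]]] := h p (mem_head _ _).
  rewrite hp2.
  exists (p.1 * q + c), (p.1 *: z + y); split.
    by case: ha => _ HD HM; apply: HD => //; rewrite mulrC; apply: HM; apply: idealpow1.
  split; first by case: (spanM_sub t) => _ HD HZ; apply: HD => //; apply: HZ.
  by rewrite scalerDr scalerA addrACA -scalerDl.
have [c [y [hc [hy gE]]]] := key s hs.
rewrite -gs in gE.
have [u hu] := jac_unit (hjac hc).
have hgt : spanM t g.
  have -> : g = u *: y.
    have -> : y = (1 - c) *: g by rewrite scalerBl scale1r {1}gE addrC addKr.
    by rewrite scalerA hu scale1r.
  by case: (spanM_sub t) => _ _ HZ; apply: HZ.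
apply: (IH N hN) => // e'; split.
  move/hNt => [r [z [hz ->]]].
  by case: (spanM_sub t) => _ HD HZ; apply: HD => //; apply: HZ.
by move=> h; apply/hNt; exists 0, e'; rewrite scale0r add0r.
Qed.
End Nak.


Section Krull.
Variable R : comNzRingType.

Definition Sg (b : R -> Prop) (g : R) (n : nat) (x : R) : Prop :=
  exists l : seq (nat * R), (forall p, p \in l -> (p.1 <= n)%N /\ idealpow b p.1 p.2) /\
    x = \sum_(p <- l) p.2 * g ^+ (n - p.1).

Lemma decomp (gs : seq R) g n x : idealpow (spanI (g :: gs)) n x -> Sg (spanI gs) g n x.
Proof.
have hb := spanI_ideal gs.
elim: n x => [|n IH] x.
  move=> _; exists [:: (0%N, x)]; rewrite big_seq1 subnn expr0 mulr1; split => // p.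
  by rewrite inE => /eqP ->.
case=> s [hs ->]; elim: s hs => [|q s IHs] hs.
  by exists [::]; rewrite !big_nil.
have hs' : forall p, p \in s -> spanI (g :: gs) p.1 /\ idealpow (spanI (g :: gs)) n p.2.
  by move=> p hp; apply: hs; rewrite inE hp orbT.
rewrite big_cons; have [l1 [hl1 hl1e]] := IHs hs'.
have [[r [y0 [hy0 hq1]]] /IH [l2 [hl2 hq2]]] := hs q (mem_head _ _).
exists (map (fun p => (p.1, r * p.2)) l2 ++ map (fun p => (p.1.+1, y0 * p.2)) l2 ++ l1).
split.
  move=> p; rewrite !mem_cat => /or3P [] /=.
  - case/mapP => p' /hl2 [h1 h2] -> /=; split; first exact: leqW.
    by case: (idealpow_ideal p'.1 hb) => _ _ HM; apply: HM.
  - case/mapP => p' /hl2 [h1 h2] -> /=; split => //.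
    exact: idealpowS.
  - by move/hl1 => [h1 h2]; split => //; apply: leqW.
rewrite !big_cat /= !big_map addrA hl1e; congr (_ + _).
rewrite hq1 hq2 /GRing.scale /= mulrDl mulr_sumr mulr_sumr -big_split /=.
rewrite -[in RHS]big_split /= big_seq [in RHS]big_seq; apply: eq_bigr => p /hl2 [h1 _].
by rewrite subSn // subSS exprS; ring.
Qed.


Lemma bound (b Q : R -> Prop) g m j x : is_ideal b -> is_ideal Q ->
  (forall y, idealpow b m y -> Q y) -> Q (g ^+ j) -> Sg b g (m + j) x -> Q x.
Proof.
move=> hb hQ hm hg [l [hl ->]]; rewrite big_seq; apply: ideal_sum => // p /hl [h1 h2].
case: (leqP m p.1) => hmp.
  by apply: idealMr => //; apply: hm; apply: idealpow_dec h2.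
have -> : (m + j - p.1 = (m - p.1) + j)%N by rewrite addnBAC // ltnW.
rewrite exprD mulrA; case: hQ => _ _ HM; exact: HM.
Qed.

Lemma powQ (Q : R -> Prop) : is_ideal Q -> forall gs : seq R,
  (forall g, g \in gs -> exists j, Q (g ^+ j)) ->
  exists n, forall x, idealpow (spanI gs) n x -> Q x.
Proof.
move=> hQ; elim=> [|g gs IH] h.
  exists 1%N => x /(idealpow1 (spanI_ideal [::])) /= ->; by case: hQ.
have h' : forall g', g' \in gs -> exists j, Q (g' ^+ j).
  by move=> g' hg'; apply: h; rewrite inE hg' orbT.
have [m hm] := IH h'; have [j hj] := h g (mem_head _ _).
exists (m + j)%N => x /decomp; apply: bound hm hj => //; exact: spanI_ideal.
Qed.

End Krull.


Section KrullThm.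
Variable R : comNzRingType.
Variable M : lmodType R.
Variable a : R -> Prop.
Hypothesis noeth : noetherian R.
Hypothesis ha : is_ideal a.
Hypothesis hjac : forall x, a x -> jacobson x.
Hypothesis fgM : fin_gen_module M.

Lemma krull (x : M) : (forall n, powmod a n (fun _ => True) x) -> x = 0.
Proof.
pose T : M -> Prop := fun _ => True.
pose N0 x := forall n, powmod a n T x.
have hN0 : submodule N0.
  split; first by move=> n; exact: sub0 (powmod_sub _ _ ha).
    by move=> y z hy hz n; apply: subD (hy n) (hz n); exact: powmod_sub.
  by move=> r y hy n; apply: subZ (hy n); exact: powmod_sub.
pose aN := powmod a 1 N0.
have aNN0 : forall y, aN y -> N0 y by move=> y; apply: powmod_le.
pose S K := submodule K /\ forall y, (K y /\ N0 y <-> aN y).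
have acc : forall C : nat -> M -> Prop, (forall n, S (C n)) -> (forall n x, C n x -> C n.+1 x) ->
     exists n, forall x, C n.+1 x -> C n x.
  move=> C hC hinc.
  have hC' : forall n, submodule (C n) by move=> n; case: (hC n).
  exact: (acc_mod noeth fgM hC' hinc).
have SaN : S aN.
  split; first exact: powmod_sub.
  by move=> y; split; [case|move=> h; split => //; apply: aNN0].
have [K [[hK hKe] hmax]] := exists_maximal acc SaN.
have [gs hgs] := noeth ha.
have hags : forall y, a y <-> spanI gs y.
  by move=> y; rewrite (hgs y); exact: ideal_spanE.
pose Q r := forall m, K (r *: m).
have hQ : is_ideal Q.
  split; first by move=> m; rewrite scale0r; exact: sub0.
    by move=> y z hy hz m; rewrite scalerDl; apply: subD.
  by move=> r y hy m; rewrite -scalerA; exact: subZ hK (hy m).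
have hpow : forall g, g \in gs -> exists j, Q (g ^+ j).
  move=> g hg.
  have ag : a g by apply/hags; exact: spanM_mem.
  pose C j m := K (g ^+ j *: m).
  have hC : forall j, submodule (C j).
    move=> j; split; first by rewrite /C scaler0; exact: sub0.
      by move=> y z hy hz; rewrite /C scalerDr; apply: subD.
    by move=> r y hy; rewrite /C scalerA mulrC -scalerA; apply: subZ.
  have hinc : forall j m, C j m -> C j.+1 m.
    by move=> j m h; rewrite /C exprS -scalerA; apply: subZ.
  have [j hj] := acc_mod noeth fgM hC hinc.
  exists j; pose K' y := exists m k, K k /\ y = g ^+ j *: m + k.
  have hK' : submodule K'.
    split; first by exists 0, 0; rewrite scaler0 addr0; split => //; exact: sub0.
      move=> y z [m1 [k1 [h1 ->]]] [m2 [k2 [h2 ->]]]; exists (m1 + m2), (k1 + k2).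
      by split; [apply: subD|rewrite scalerDr addrACA].
    move=> r y [m1 [k1 [h1 ->]]]; exists (r *: m1), (r *: k1).
    by split; [apply: subZ|rewrite scalerDr !scalerA mulrC].
  have SK' : S K'.
    split => // y; split.
      case=> [[m [k [hk hy]]] hN0y]; apply/hKe; split => //.
      have agy : aN (g *: y).
        by apply: powmod_single => //; rewrite -[g]mulr1; apply: idealpowS.
      have Kgy : K (g *: y) by case/hKe: agy.
      have : C j.+1 m.
        rewrite /C.
        have -> : g ^+ j.+1 *: m = g *: y - g *: k by rewrite hy scalerDr exprS scalerA addrK.
        by apply: subB => //; apply: subZ.
      by move/hj => hjm; rewrite hy; exact: subD hK hjm hk.
    by case/hKe => hKy hN; split => //; exists 0, y; rewrite scaler0 add0r.
  move=> m; apply: (hmax K' SK').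
    by move=> y hy; exists 0, y; rewrite scaler0 add0r.
  by exists m, 0; split; [exact: sub0|rewrite addr0].
have [n hn] := powQ hQ hpow.
have N0K : forall y, N0 y -> K y.
  move=> y hy; have [s [hs ->]] := hy n; rewrite big_seq; apply: sub_sum => // p /hs [h1 _].
  by apply: hn; apply: idealpow_mono h1 => z /hags.
have [l hl] := fgM.
have [t ht] := noeth_mod noeth hN0 (fun e _ => proj1 (mod_spanE l e) (hl e)).
move=> hx; apply: (nakayama noeth ha hjac hN0 ht) => //.
by move=> e he; apply/hKe; split => //; apply: N0K.
Qed.

End KrullThm.


Lemma choice_fun (A B : Type) (P : A -> B -> Prop) :
  (forall x, exists y, P x y) -> exists f : A -> B, forall x, P x (f x).
Proof.
move=> h; exists (fun x => proj1_sig (constructive_indefinite_description _ (h x))).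
by move=> x; exact: proj2_sig.
Qed.

Section Compl.
Variable R : comNzRingType.
Variable a : R -> Prop.
Hypothesis noeth : noetherian R.
Hypothesis ha : is_ideal a.

Lemma csq_diff t n m : csq a t -> (n <= m)%N -> idealpow a n (t m - t n).
Proof.
move=> ht /subnK <-; elim: (m - n)%N => [|k IH]; first by rewrite add0n subrr; case: (idealpow_ideal n ha).
have -> : t (k.+1 + n)%N - t n = (t (k + n).+1 - t (k + n)%N) + (t (k + n)%N - t n).
  by rewrite addSn addrA subrK.
case: (idealpow_ideal n ha) => _ HD _; apply: HD => //.
by apply: (idealpow_dec ha (leq_addl k n)); apply: ht.
Qed.

Lemma csqD s t : csq a s -> csq a t -> csq a (fun n => s n + t n).
Proof.
move=> hs ht n; have -> : s n.+1 + t n.+1 - (s n + t n) = (s n.+1 - s n) + (t n.+1 - t n).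
  by rewrite opprD addrACA.
by case: (idealpow_ideal n ha) => _ HD _; apply: HD.
Qed.

Lemma csqZ r s : csq a s -> csq a (fun n => r * s n).
Proof.
move=> hs n; rewrite -mulrBr.
by case: (idealpow_ideal n ha) => _ _ HM; apply: HM.
Qed.

Lemma csqC c : csq a (fun _ => c).
Proof. by move=> n; rewrite subrr; case: (idealpow_ideal n ha). Qed.

Lemma csqB s t : csq a s -> csq a t -> csq a (fun n => s n - t n).
Proof.
move=> hs ht; have -> : (fun n => s n - t n) = (fun n => s n + -1 * t n).
  by apply: functional_extensionality => n; rewrite mulN1r.
exact: csqD hs (csqZ (-1) ht).
Qed.

Lemma csq_sum k (w : nat -> nat -> R) : (forall i, csq a (w i)) ->
  csq a (fun n => \sum_(i < k) w i n).
Proof.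
move=> hw; elim: k => [|k IH].
  have -> : (fun n => \sum_(i < 0) w i n) = (fun _ => 0).
    by apply: functional_extensionality => n; rewrite big_ord0.
  exact: csqC.
have -> : (fun n => \sum_(i < k.+1) w i n) = (fun n => \sum_(i < k) w i n + w k n).
  by apply: functional_extensionality => n; rewrite big_ord_recr.
exact: csqD IH (hw k).
Qed.

Lemma ideal_span_nth (gs : seq R) i : (i < size gs)%N -> ideal_span gs gs`_i.
Proof. by move=> hi; apply/ideal_spanE; apply: spanM_mem; exact: mem_nth. Qed.

Section Gens.
Variable K : nat.
Variable gs : seq R.
Hypothesis hgs : forall x, idealpow a K x <-> ideal_span gs x.

Lemma expand m x : idealpow a (m + K) x ->
  exists c : nat -> R, (forall i, idealpow a m (c i)) /\ x = \sum_(i < size gs) c i * gs`_i.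
Proof.
elim: m x => [|m IH] x.
  by rewrite add0n => /hgs [c ->]; exists c.
rewrite addSn => -[s [hs ->]]; elim: s hs => [|p s IHs] hs.
  exists (fun _ => 0); rewrite big_nil; split; first by move=> i; case: (idealpow_ideal m.+1 ha).
  by rewrite big1 // => i _; rewrite mul0r.
have hs' : forall q, q \in s -> a q.1 /\ idealpow a (m + K) q.2.
  by move=> q hq; apply: hs; rewrite inE hq orbT.
rewrite big_cons; have [c1 [hc1 ->]] := IHs hs'.
have [hp1 /IH [c2 [hc2 ->]]] := hs p (mem_head _ _).
exists (fun i => p.1 * c2 i + c1 i); split.
  by move=> i; case: (idealpow_ideal m.+1 ha) => _ HD _; apply: HD => //; apply: idealpowS.
rewrite mulr_sumr -big_split; apply: eq_bigr => i _ /=.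
by rewrite mulrDl mulrA.
Qed.

Lemma Hlemma t : csq a t -> exists u : nat -> nat -> R, (forall i, csq a (u i)) /\
  forall n, \sum_(i < size gs) u i n * gs`_i = t (n + K)%N - t K.
Proof.
move=> ht.
have : forall k, exists c : nat -> R, (forall i, idealpow a k (c i)) /\
    t (k + K).+1 - t (k + K)%N = \sum_(i < size gs) c i * gs`_i.
  by move=> k; apply: expand; apply: ht.
case/choice_fun => f hf.
exists (fun i n => \sum_(k < n) f k i); split.
  move=> i n /=; rewrite big_ord_recr /= addrAC subrr add0r; exact: (hf n).1.
elim=> [|n IH].
  by rewrite add0n subrr big1 // => i _; rewrite big_ord0 mul0r.
under eq_bigr do rewrite big_ord_recr /= mulrDl.
rewrite big_split /= IH -(hf n).2 addSn; by rewrite addrC addrA subrK.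
Qed.

End Gens.
End Compl.


Section Hom.
Variable R : comNzRingType.
Variable M : lmodType R.
Variable a : R -> Prop.
Hypothesis noeth : noetherian R.
Hypothesis ha : is_ideal a.
Variable phi : (nat -> R) -> M.
Hypothesis hphi : is_hom a phi.

Lemma phi_ext s t : (forall n, s n = t n) -> phi s = phi t.
Proof. by move=> h; congr phi; apply: functional_extensionality. Qed.

Lemma phiD s t : csq a s -> csq a t -> phi (fun n => s n + t n) = phi s + phi t.
Proof. by case: hphi => _ h _; apply: h. Qed.

Lemma phiZ r s : csq a s -> phi (fun n => r * s n) = r *: phi s.
Proof. by case: hphi => _ _ h; apply: h. Qed.

Lemma phiE s t : csq a s -> csq a t -> ceq a s t -> phi s = phi t.
Proof. by case: hphi => h _ _; apply: h. Qed.

Lemma csq_one : csq a (one_seq R).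
Proof. by move=> n; rewrite /one_seq subrr; case: (idealpow_ideal n ha). Qed.

Lemma phiC c : phi (fun _ => c) = c *: phi (one_seq R).
Proof. by rewrite -phiZ; [apply: phi_ext => n; rewrite /one_seq mulr1|exact: csq_one]. Qed.

Lemma phi0 : phi (fun _ => 0) = 0.
Proof. by rewrite phiC scale0r. Qed.

Lemma phiB s t : csq a s -> csq a t -> phi (fun n => s n - t n) = phi s - phi t.
Proof.
move=> hs ht; have h := phiD (csqB ha hs ht) ht.
rewrite (phi_ext (t := s)) in h; last by move=> n; rewrite subrK.
by rewrite h addrK.
Qed.

Lemma phi_sum k (w : nat -> nat -> R) : (forall i, csq a (w i)) ->
  phi (fun n => \sum_(i < k) w i n) = \sum_(i < k) phi (w i).
Proof.
move=> hw; elim: k => [|k IH].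
  by rewrite big_ord0 -phi0; apply: phi_ext => n; rewrite big_ord0.
rewrite big_ord_recr /= -IH -(phiD (csq_sum ha _ hw) (hw _)).
by apply: phi_ext => n; rewrite big_ord_recr.
Qed.

Definition img (x : M) := exists s, csq a s /\ x = phi s.

Lemma img_sub : submodule img.
Proof.
split; first by exists (fun _ => 0); split; [exact: (csqC ha 0)|rewrite phi0].
  move=> x y [s [hs ->]] [t [ht ->]]; exists (fun n => s n + t n).
  by split; [exact: (csqD ha hs ht)|rewrite phiD].
move=> r x [s [hs ->]]; exists (fun n => r * s n); split; [exact: (csqZ ha r hs)|by rewrite phiZ].
Qed.

Lemma img_one : img (phi (one_seq R)).
Proof. exists (one_seq R); split => //; exact: csq_one. Qed.

Lemma Jlemma K e : csq a e -> idealpow a K (e K) -> powmod a K img (phi e).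
Proof.
move=> he heK.
have [gs hgs] := noeth (idealpow_ideal K ha).
have [u [hu hue]] := Hlemma ha hgs he.
pose v n := \sum_(i < size gs) gs`_i * u i n + e K * one_seq R n.
have hv : forall n, v n = e (n + K)%N.
  move=> n; rewrite /v /one_seq mulr1; under eq_bigr do rewrite mulrC.
  by rewrite hue subrK.
have csqv : csq a v.
  move=> n; rewrite !hv; apply: (idealpow_dec ha (leq_addr K n)); rewrite addSn; exact: he.
have -> : phi e = phi v.
  apply: phiE => // n; rewrite hv -opprB.
  by apply: idealN; [exact: idealpow_ideal|]; apply: csq_diff => //; apply: leq_addr.
have csqw : forall i, csq a (fun n => gs`_i * u i n) by move=> i; exact: (csqZ ha _ (hu i)).
rewrite /v phiD; last exact: (csqZ ha _ csq_one).
  rewrite (phi_sum _ csqw) phiZ; last exact: csq_one.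
  have hsub := powmod_sub K img ha.
  apply: subD => //; last first.
    by apply: powmod_single => //; exact: img_one.
  apply: sub_sum => // i _; rewrite phiZ //.
  apply: powmod_single; first by apply/hgs; exact: ideal_span_nth.
  by exists (u i); split.
exact: (csq_sum ha _ csqw).
Qed.

End Hom.


Section Complete.
Variable R : comNzRingType.
Variable M : lmodType R.
Variable a : R -> Prop.
Hypothesis noeth : noetherian R.
Hypothesis ha : is_ideal a.
Hypothesis hjac : forall x, a x -> jacobson x.
Hypothesis fgM : fin_gen_module M.
Variable phi : (nat -> R) -> M.
Hypothesis hphi : is_hom a phi.

Lemma rep n y : powmod a n (img a phi) y ->
  exists d, csq a d /\ (forall k, idealpow a n (d k)) /\ y = phi d.
Proof.
case=> s [hs ->]; elim: s hs => [|p s IH] hs.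
  exists (fun _ => 0); split; first exact: (csqC ha 0).
  split; first by move=> k; case: (idealpow_ideal n ha).
  by rewrite big_nil (phi0 ha hphi).
have hs' : forall q, q \in s -> idealpow a n q.1 /\ img a phi q.2.
  by move=> q hq; apply: hs; rewrite inE hq orbT.
rewrite big_cons; have [d [hd [hdk ->]]] := IH hs'.
have [hp1 [t [ht hp2]]] := hs p (mem_head _ _).
exists (fun k => p.1 * t k + d k); split; first exact: (csqD ha (csqZ ha _ ht) hd).
split; first by move=> k; case: (idealpow_ideal n ha) => _ HD HM; apply: HD => //; rewrite mulrC; apply: HM.
by rewrite (phiD hphi (csqZ ha _ ht) hd) (phiZ hphi _ ht) hp2.
Qed.

Lemma img_complete : adic_complete a (img a phi).
Proof.
split.
  move=> m _ hm; apply: (krull noeth ha hjac fgM) => n; exact: powmod_T (hm n).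
move=> x hx hstep.
have [s0 [hs0 hx0]] := hx 0%N.
have : forall k, exists d, csq a d /\ (forall j, idealpow a k (d j)) /\ x k.+1 - x k = phi d.
  by move=> k; apply: rep; apply: hstep.
case/choice_fun => d hd.
have csqd : forall k, csq a (d k) by move=> k; case: (hd k).
pose w K := fun n => s0 n + \sum_(k < K) d k n.
have csqw : forall K, csq a (w K).
  by move=> K; apply: (csqD ha hs0); exact: (csq_sum ha _ csqd).
have phiw : forall K, phi (w K) = x K.
  elim=> [|K IH].
    by rewrite hx0; apply: phi_ext => n; rewrite /w big_ord0 addr0.
  have -> : phi (w K.+1) = phi (fun n => w K n + d K n).
    by apply: phi_ext => n; rewrite /w big_ord_recr /= addrA.
  rewrite (phiD hphi (csqw K) (csqd K)) IH; have [_ [_ <-]] := hd K.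
  by rewrite addrC subrK.
pose s n := w n n.
have csqs : csq a s.
  move=> n; rewrite /s /w big_ord_recr /=.
  have -> : s0 n.+1 + (\sum_(i < n) d i n.+1 + d n n.+1) - (s0 n + \sum_(k < n) d k n)
      = (s0 n.+1 - s0 n) + (\sum_(i < n) (d i n.+1 - d i n) + d n n.+1).
    rewrite sumrB; ring.
  case: (idealpow_ideal n ha) => _ HD _; apply: (HD); first exact: hs0.
  apply: (HD); last by case: (hd n) => _ [h _]; apply: h.
  by apply: ideal_sum; [exact: idealpow_ideal|move=> i _; apply: csqd].
exists (phi s); split; first by exists s.
move=> K; rewrite -phiw -(phiB ha hphi csqs (csqw K)).
apply: (Jlemma noeth ha hphi); first exact: (csqB ha csqs (csqw K)).
rewrite /s subrr; by case: (idealpow_ideal K ha).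
Qed.

End Complete.


Section HomAlg.
Variable R : comNzRingType.
Variable M : lmodType R.
Variable a : R -> Prop.

Lemma hom_zero : @is_hom R M a (fun _ => 0).
Proof. by split => // *; rewrite ?addr0 ?scaler0. Qed.

Lemma hom_add (phi psi : (nat -> R) -> M) : is_hom a phi -> is_hom a psi -> is_hom a (fun s => phi s + psi s).
Proof.
move=> [h1 h2 h3] [k1 k2 k3]; split.
- by move=> s t hs ht hst; rewrite (h1 s t) // (k1 s t).
- by move=> s t hs ht; rewrite h2 // k2 // addrACA.
- by move=> r s hs; rewrite h3 // k3 // scalerDr.
Qed.

Lemma hom_scale r (phi : (nat -> R) -> M) : is_hom a phi -> is_hom a (fun s => r *: phi s).
Proof.
move=> [h1 h2 h3]; split.
- by move=> s t hs ht hst; rewrite (h1 s t).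
- by move=> s t hs ht; rewrite h2 // scalerDr.
- by move=> r' s hs; rewrite h3 // !scalerA mulrC.
Qed.

Lemma hom_sum k (c : nat -> R) (ps : nat -> (nat -> R) -> M) :
  (forall i, (i < k)%N -> is_hom a (ps i)) -> is_hom a (fun s => \sum_(i < k) c i *: ps i s).
Proof.
move=> h; split.
- move=> s t hs ht hst; apply: eq_bigr => i _; case: (h i (ltn_ord i)) => h1 _ _.
  by rewrite (h1 s t).
- move=> s t hs ht; rewrite -big_split; apply: eq_bigr => i _ /=.
  by case: (h i (ltn_ord i)) => _ h2 _; rewrite h2 // scalerDr.
- move=> r s hs; rewrite scaler_sumr; apply: eq_bigr => i _.
  by case: (h i (ltn_ord i)) => _ _ h3; rewrite h3 // !scalerA mulrC.
Qed.
End HomAlg.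

End Aux.
Import Aux.

Theorem proposition2p5 (R : comNzRingType) (a : R -> Prop) (M : lmodType R) :
  noetherian R -> is_ideal a -> (forall x, a x -> jacobson x) ->
  fin_gen_module M ->
  (* r m is well defined on C_a(M) (uniqueness of the limit) *)
      (forall s (m x y : M), csq a s -> Ca a m ->
          cact a s m x -> cact a s m y -> x = y) /\
      (* f is well defined: f(m) exists and lies in Hom_R(R^a, M) *)
      (forall m : M, Ca a m ->
          exists phi, is_hom a phi /\ is_f_of a m phi) /\
      (* e is well defined: phi(1) lies in C_a(M) *)
      (forall phi : (nat -> R) -> M, is_hom a phi -> Ca a (phi (one_seq R))) /\
      (* e o f = id *)
      (forall (m : M) phi, Ca a m -> is_hom a phi -> is_f_of a m phi ->
          phi (one_seq R) = m) /\
      (* f o e = id *)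
      (forall phi : (nat -> R) -> M, is_hom a phi ->
          is_f_of a (phi (one_seq R)) phi) /\
      (* Hom_R(R^a, M) is a finitely generated R-module *)
      (exists (k : nat) (ps : nat -> (nat -> R) -> M),
          (forall i, (i < k)%N -> is_hom a (ps i)) /\
          forall phi, is_hom a phi ->
            exists c : nat -> R, forall s, csq a s ->
              phi s = \sum_(i < k) c i *: ps i s).
Proof.
move=> noeth ha hjac fgM.
pose T : M -> Prop := fun _ => True.
pose Lim (s : nat -> R) (m x : M) := forall n, powmod a n T (x - s n *: m).
have uniq : forall s m x y, Lim s m x -> Lim s m y -> x = y.
  move=> s m x y hx hy; apply/eqP; rewrite -subr_eq0; apply/eqP.
  apply: (krull noeth ha hjac fgM) => n.
  have -> : x - y = (x - s n *: m) - (y - s n *: m) by rewrite opprB addrA subrK.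
  by apply: subB; [exact: powmod_sub|apply: hx|apply: hy].
have cactLim : forall s m x, cact a s m x -> Lim s m x.
  by move=> s m x [_ h] n; exact: powmod_T (h n).
have CaN : forall N : M -> Prop, submodule N -> adic_complete a N -> forall y, N y -> Ca a y.
  by move=> N h1 h2 y hy; exists N.
have p5 : forall phi : (nat -> R) -> M, is_hom a phi -> is_f_of a (phi (one_seq R)) phi.
  move=> phi hphi s hs; split.
    by apply: (CaN _ (img_sub ha hphi) (img_complete noeth ha hjac fgM hphi)); exists s.
  move=> n.
  have -> : phi s - s n *: phi (one_seq R) = phi (fun k => s k - s n).
    by rewrite (phiB ha hphi hs (csqC ha (s n))) (phiC ha hphi).
  apply: (powmod_monoN (CaN _ (img_sub ha hphi) (img_complete noeth ha hjac fgM hphi))).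
  apply: (Jlemma noeth ha hphi); first exact: (csqB ha hs (csqC ha (s n))).
  by rewrite subrr; case: (idealpow_ideal n ha).
split.
  by move=> s m x y _ _ /cactLim hx /cactLim hy; apply: uniq hx hy.
split.
  move=> m [N [hN hNc hm]].
  have : forall s, exists L, csq a s -> N L /\ forall n, powmod a n N (L - s n *: m).
    move=> s; case: (classic (csq a s)) => hs; last by exists 0.
    have [L [hL1 hL2]] : exists m0, N m0 /\ forall n, powmod a n N (m0 - s n *: m).
      apply: ((proj2 hNc) (fun n => s n *: m)) => n /=; first exact: subZ _ hN hm.
      rewrite -scalerBl; exact: powmod_single (hs n) hm.
    by exists L.
  case/choice_fun => phi hphi.
  have hLim : forall s, csq a s -> Lim s m (phi s).
    by move=> s hs n; apply: powmod_T; apply: (hphi s hs).2.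
  have single : forall n r x, idealpow a n r -> powmod a n T (r *: x).
    by move=> n r x hr; exact: powmod_single.
  exists phi; split.
    split.
    - move=> s t hs ht hst; apply: (uniq t m) (hLim t ht) => n.
      have -> : phi s - t n *: m = (phi s - s n *: m) + (s n - t n) *: m.
        by rewrite scalerBl addrA subrK.
      by apply: subD; [exact: powmod_sub|apply: hLim|apply: single; apply: hst].
    - move=> s t hs ht; apply: (uniq (fun n => s n + t n) m); first exact: hLim (csqD ha hs ht).
      move=> n; have -> : phi s + phi t - (s n + t n) *: m = (phi s - s n *: m) + (phi t - t n *: m).
        by rewrite scalerDl opprD addrACA.
      by apply: subD; [exact: powmod_sub|apply: hLim|apply: hLim].
    - move=> r s hs; apply: (uniq (fun n => r * s n) m); first exact: hLim (csqZ ha r hs).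
      move=> n; have -> : r *: phi s - (r * s n) *: m = r *: (phi s - s n *: m).
        by rewrite scalerBr scalerA.
      by apply: subZ; [exact: powmod_sub|apply: hLim].
  move=> s hs; have [h1 h2] := hphi s hs; split; first exact: CaN h1.
  by move=> n; apply: (powmod_monoN (CaN _ hN hNc)); apply: h2.
split.
  move=> phi hphi; apply: (CaN _ (img_sub ha hphi) (img_complete noeth ha hjac fgM hphi)).
  exact: img_one.
split.
  move=> m phi _ hphi hf; apply: (uniq (one_seq R) m).
    by apply: cactLim; apply: hf; exact: csq_one.
  by move=> n; rewrite /one_seq scale1r subrr; exact: sub0 (powmod_sub _ _ ha).
split; first exact: p5.
pose E (x : M) := exists phi : (nat -> R) -> M, is_hom a phi /\ x = phi (one_seq R).
have hE : submodule E.
  split; first by exists (fun _ => 0); split => //; exact: hom_zero.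
    by move=> x y [p1 [h1 ->]] [p2 [h2 ->]]; exists (fun s => p1 s + p2 s); split => //; exact: hom_add.
  by move=> r x [p1 [h1 ->]]; exists (fun s => r *: p1 s); split => //; exact: hom_scale.
have [l hl] := fgM.
have [t ht] := noeth_mod noeth hE (fun e _ => proj1 (mod_spanE l e) (hl e)).
have : forall i, exists ps, is_hom a ps /\ ((i < size t)%N -> t`_i = ps (one_seq R)).
  move=> i; case: (ltnP i (size t)) => hi.
    have [ps [hps ->]] : E t`_i by apply/ht; apply: spanM_mem; exact: mem_nth.
    by exists ps.
  exists (fun _ => 0); split; first exact: hom_zero.
  by [].

case/choice_fun => ps hps.
exists (size t), ps; split; first by move=> i _; case: (hps i).
move=> phi hphi.
have [c hc] : mod_span t (phi (one_seq R)) by apply/mod_spanE; apply/ht; exists phi.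
exists c => s hs.
pose psi s := \sum_(i < size t) c i *: ps i s.
have hpsi : is_hom a psi by apply: hom_sum => i _; case: (hps i).
have e1 : psi (one_seq R) = phi (one_seq R).
  by rewrite hc; apply: eq_bigr => i _; case: (hps i) => _ ->.
apply: (uniq s (phi (one_seq R))); first exact: cactLim (p5 phi hphi s hs).
rewrite -e1; exact: cactLim (p5 psi hpsi s hs).
Qed.
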